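(* Let $X$ be a nonempty compact metric space, $Y$ a compact metric space with metric $d_Y$ and $\mathcal Y$ an $(X)$-regularizing family for $Y$. Let $(Z_n)_{n\ge1}$ be a sequence of members of $\mathcal Y$ such that $Z_1$ is arbitrary and, for each $n\ge1$, $Z_{n+1}\subset N_{\mathrm{diam}(Z_n)}(Z_n)$ and $\mathrm{diam}(Z_{n+1})<\tfrac12\mathrm{diam}(Z_n)$. Then $(Z_n)$ converges, and if $p=\lim_nZ_n$ then $$\{p\}\cup\bigcup_{n\ge1}Z_n\subset N_{2\,\mathrm{diam}(Z_1)}(Z_1).$$
   Context: An $(X)$-regularizing family for $Y$ is a countably infinite family $\mathcal Y$ of subsets of $Y$ such that: (a1) the members are pairwise disjoint subspaces homeomorphic to $X$; (a2) $\mathcal Y$ is null (for every $\varepsilon>0$ only finitely many members have diameter $\ge\varepsilon$); (a3) each member has dense complement in $Y$; (a4) $\bigcup\mathcal Y$ is dense in $Y$; (a5) any two points not in a common member of $\mathcal Y$ are separated by an open, closed, $\mathcal Y$-saturated subset of $Y$. Notation: $N_\varepsilon(A)=\{x\in Y:d_Y(x,A)<\varepsilon\}$, $\mathrm{diam}(A)=\sup\{d_Y(x,y):x,y\in A\}$. A sequence $(Z_n)$ of pairwise distinct members of $\mathcal Y$ converges to $p$ (written $p=\lim_nZ_n$) if $p_n\to p$ for some (equivalently any) choice $p_n\in Z_n$. *)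

(* Defs.v *)
From HB Require Import structures.
From mathcomp Require Import all_boot all_order all_algebra.
From mathcomp Require Import all_classical all_reals all_analysis.
Set Implicit Arguments. Unset Strict Implicit. Unset Printing Implicit Defensive.
Import Order.TTheory GRing.Theory Num.Theory.
Local Open Scope classical_set_scope.
Local Open Scope ring_scope.

Section Defs.
Context {R : realType}.

Definition diam (Y : metricType R) (A : set Y) : R :=
  sup [set mdist x y | x in A & y in A].

Definition dist_set (Y : metricType R) (x : Y) (A : set Y) : R :=
  inf [set mdist x a | a in A].

Definition Nbhd (Y : metricType R) (eps : R) (A : set Y) : set Y :=
  [set x | dist_set x A < eps].

Definition homeomorphic_to (X Y : metricType R) (Z : set Y) : Prop :=
  exists (f : X -> Y) (g : Y -> X),
    continuous f /\ f @` setT = Z /\ (forall x, g (f x) = x) /\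
    {within Z, continuous g}.

Definition saturated (Y : metricType R) (F : set (set Y)) (U : set Y) : Prop :=
  forall Z, F Z -> Z `&` U !=set0 -> Z `<=` U.

Definition regularizing_family (X Y : metricType R) (F : set (set Y)) : Prop :=
  (countable F /\ infinite_set F) /\ [/\
      (forall Z, F Z -> homeomorphic_to X Z) /\
      (forall Z Z', F Z -> F Z' -> Z <> Z' -> Z `&` Z' = set0),
      (forall eps : R, 0 < eps -> finite_set [set Z | F Z /\ eps <= diam Z]),
      (forall Z, F Z -> dense (~` Z)),
      dense (\bigcup_(Z in F) Z) &
      (forall p q : Y, p <> q -> ~ (exists Z, [/\ F Z, Z p & Z q]) ->
         exists U : set Y, [/\ open U, closed U, saturated F U, U p & (~ U q)])].

Definition family_seq_cvg_to (Y : metricType R) (F : set (set Y))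
    (Z : nat -> set Y) (p : Y) : Prop :=
  (forall n, F (Z n)) /\ injective Z /\
  exists pn : nat -> Y, (forall n, Z n (pn n)) /\ pn @ \oo --> p.

End Defs.

(* Main.v *)
Require Import Defs.
From HB Require Import structures.
From mathcomp Require Import all_boot all_order all_algebra.
From mathcomp Require Import all_classical all_reals all_analysis.
From mathcomp Require Import lra zify.
Import Order.TTheory GRing.Theory Num.Theory.
Local Open Scope classical_set_scope.
Local Open Scope ring_scope.

Lemma my_ccvg {R : realType} {T : metricType R} (U : set T) (F : set_system T) :
  ProperFilter F -> cauchy F -> F U -> compact U -> exists x : T, F --> x.
Proof.
move=> PF cf FU /(_ F PF FU) [x [_ clFx]]; exists x.
apply/cvg_entourageP => E entE.
have : nbhs entourage (split_ent E) by rewrite nbhs_filterE.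
move=> /(cf (split_ent E))[] [D1 D2]/= /[!nbhs_simpl] -[FD1 FD2 D1D2E].
have : nbhs x (xsection (split_ent E) x) by exact: nbhs_entourage.
move=> /(clFx _ (xsection (split_ent E) x) FD1)[z [Dz /xsectionP Exz]].
by near=> t; apply/(entourage_split z entE Exz)/D1D2E; split => //; near: t.
Unshelve. all: by end_near. Qed.

Section H.
Context {R : realType} {Y : metricType R}.

Lemma mdist_cont (y0 : Y) : continuous (fun z : Y => (mdist y0 z : R^o)).
Proof.
move=> y; apply/cvgrPdist_lt => e e0.
have : \forall z \near y, ball y e z by exact: nbhsx_ballx.
apply: filterS => z; rewrite ballEmdist /= => hz.
have h1 := metric_triangle y0 y z.
have h2 := metric_triangle y0 z y.
rewrite (metric_sym z y) in h2.
by rewrite ltr_distlC; apply/andP; split; lra.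
Qed.

Lemma bounded_metric : compact [set: Y] -> exists M : R, forall x y : Y, mdist x y <= M.
Proof.
move=> cY.
case: (pselect (exists y0 : Y, True)) => [[y0 _]|nY]; last first.
  by exists 0 => x; exfalso; apply: nY; exists x.
have := continuous_compact (continuous_subspaceT (mdist_cont y0)) cY.
move=> /compact_bounded[N [_ NP]].
have H : globally (range (mdist y0)) [set x0 : R | `|x0| <= `|N| + 1].
  by apply: NP; rewrite (le_lt_trans (ler_norm N)) // ltrDl.
 exists (2 * (`|N| + 1)) => x y.
have hx : `|(mdist y0 x : R^o)| <= `|N| + 1 by apply: H; exists x.
have hy : `|(mdist y0 y : R^o)| <= `|N| + 1 by apply: H; exists y.
have := metric_triangle x y0 y; rewrite (metric_sym x y0).
rewrite (ger0_norm (mdist_ge0 _ _)) in hx; rewrite (ger0_norm (mdist_ge0 _ _)) in hy. lra.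
Qed.

Variable M : R.
Hypothesis hM : forall x y : Y, mdist x y <= M.

Lemma diam_ub (A : set Y) x y : A x -> A y -> mdist x y <= diam A.
Proof.
move=> Ax Ay; apply: ub_le_sup; last by exists x => //; exists y.
by exists M => _ [a _ [b _ <-]].
Qed.

Lemma diam_ge0 (A : set Y) x : A x -> 0 <= diam A.
Proof. by move=> Ax; rewrite -(mdistxx x); apply: diam_ub. Qed.

Lemma dist_lb (A : set Y) x a : A a -> dist_set x A <= mdist x a.
Proof.
move=> Aa; apply: ge_inf; last by exists a.
by exists 0 => _ [b _ <-]; apply: mdist_ge0.
Qed.

Lemma dist_lt (A : set Y) x e : A !=set0 -> dist_set x A < e ->
  exists a, A a /\ mdist x a < e.
Proof.
move=> [a0 Aa0] /inf_lt[]; first by exists (mdist x a0), a0.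
by move=> _ [a Aa <-] h; exists a.
Qed.

Lemma dist_tri (A : set Y) x y : A !=set0 ->
  dist_set x A <= mdist x y + dist_set y A.
Proof.
move=> [a0 Aa0]; rewrite -lerBlDl; apply: lb_le_inf; first by exists (mdist y a0), a0.
move=> _ [a Aa <-]; rewrite lerBlDl.
exact: (le_trans (dist_lb _ x _ Aa) (metric_triangle x y a)).
Qed.
End H.

Theorem lemma2 (R : realType) (X Y : metricType R) (F : set (set Y))
  (x0 : X) (cX : compact [set: X]) (cY : compact [set: Y])
  (hF : regularizing_family X F)
  (Z : nat -> set Y)
  (hZ : forall n, F (Z n))
  (hsub : forall n, Z n.+1 `<=` Nbhd (diam (Z n)) (Z n))
  (hdiam : forall n, diam (Z n.+1) < diam (Z n) / 2) :
  (exists p : Y, family_seq_cvg_to F Z p) /\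
  (forall p : Y, family_seq_cvg_to F Z p ->
     [set p] `|` \bigcup_n Z n `<=` Nbhd (2 * diam (Z 0%N)) (Z 0%N)).
Proof.
have [M hM] := bounded_metric cY.
have Zne : forall n, Z n !=set0.
  move=> n; case: hF => _ [[/(_ _ (hZ n)) [f [g [_ [fZ _]]]] _] _ _ _ _].
  by exists (f x0); rewrite -fZ; exists x0.
pose D n := diam (Z n).
have D0 n : 0 <= D n by have [z zn] := Zne n; exact: (diam_ge0 _ hM _ _ zn).
have hD n : D n.+1 < D n / 2 := hdiam n.
have Dpos n : 0 < D n by have := D0 n.+1; have := hD n; lra.
have nearZ n x : Z n.+1 x -> exists y, Z n y /\ mdist x y < D n.
  by move=> /hsub; exact: (dist_lt _ _ _ (Zne n)).
have chain m c n : (forall x, Z n x -> dist_set x (Z m) <= c - 2 * D n) ->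
   forall k x, Z (n + k)%N x -> dist_set x (Z m) <= c - 2 * D (n + k)%N.
  move=> H; elim=> [|k IH] x; first by rewrite addn0; apply: H.
  rewrite addnS => /nearZ [y [Zy dxy]].
  have := dist_tri _ x y (Zne m); have := IH y Zy; have := hD (n+k)%N; lra.
have chainn n k x : Z (n + k)%N x -> dist_set x (Z n) <= 2 * D n - 2 * D (n + k)%N.
  apply: chain => y Zy; have := dist_lb _ y _ Zy; rewrite mdistxx; lra.
have chain0 k x : Z (1 + k)%N x -> dist_set x (Z 0%N) <= D 0%N + 2 * D 1%N - 2 * D (1 + k)%N.
  apply: chain => y /hsub; rewrite /Nbhd /= -/(D 0%N); lra.
have Ddec n k : D (n + k.+1)%N < D n.
  elim: k => [|k IH]; first by rewrite addn1; have := hD n; have := D0 n; lra.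
  by rewrite addnS; have := hD (n + k.+1)%N; have := D0 (n + k.+1)%N; lra.
have Zinj : injective Z.
  move=> a b eqab; case: (ltngtP a b) => // h; exfalso.
  - have := Ddec a (b - a.+1)%N; have -> : (a + (b - a.+1).+1)%N = b by lia.
    by rewrite /D eqab ltxx.
  - have := Ddec b (a - b.+1)%N; have -> : (b + (a - b.+1).+1)%N = a by lia.
    by rewrite /D eqab ltxx.
have [pn hpn] := choice Zne.
have cb n m : (n <= m)%N -> mdist (pn n) (pn m) <= 4 * D n.
  move=> nm; have := chainn n (m - n)%N (pn m); rewrite subnKC // => /(_ (hpn m)) h.
  have [a [Za da]] : exists a, Z n a /\ mdist (pn m) a < 3 * D n.
    apply: (dist_lt _ _ _ (Zne n)); have := D0 m; have := Dpos n; lra.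
  have := metric_triangle (pn n) a (pn m); rewrite (metric_sym a (pn m)).
  have := diam_ub _ hM _ _ _ (hpn n) Za; rewrite -/(D n); lra.
have Dn n : D n * n.+1%:R <= D 0%N.
  elim: n => [|n IH]; first by rewrite mulr1.
  have e1 : (n.+2%:R : R) = n%:R + 2 by rewrite -addn2 natrD.
  have e2 : (n.+1%:R : R) = n%:R + 1 by rewrite -addn1 natrD.
  rewrite e1; rewrite e2 in IH; have := hD n; have := D0 n; have : (0 : R) <= n%:R by [].
  nra.
have small e : 0 < e -> exists N, 4 * D N < e.
  move=> e0; exists (Num.truncn (4 * D 0%N / e)).
  set N := Num.truncn _.
  have := truncnS_gt (4 * D 0%N / e); rewrite -/N ltr_pdivrMr // => h.
  have := Dn N; have : (0 : R) < N.+1%:R by [].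
  nra.
have cc : cauchy_ex (pn @ \oo).
  move=> e e0; have [N hN] := small e e0; exists (pn N); exists N => // m /= hm.
  by rewrite ballEmdist /=; have := cb N m hm; lra.
have [p hp] := my_ccvg _ _ _ (cauchy_exP _ cc) filterT cY.
split; first by exists p; split => //; split => //; exists pn.
move=> q [_ [_ [qn [hqn qp]]]] y [->|[n _ Zny]]; rewrite /Nbhd /= -/(D 0%N).
- have e0 : 0 < D 0%N - 2 * D 1%N by have := hD 0%N; lra.
  have := qp _ (nbhsx_ballx q _ e0).
  case=> N _ HN.
  have := HN N.+1 (leqnSn N); rewrite /= ballEmdist /= => hq.
  have := chain0 N (qn N.+1) (hqn N.+1).
  have := dist_tri _ q (qn N.+1) (Zne 0%N); have := D0 (1 + N)%N; lra.
- case: n Zny => [|k] Zy.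
    have := dist_lb _ y _ Zy; rewrite mdistxx; have := Dpos 0%N; lra.
  have := chain0 k y Zy; have := D0 (1 + k)%N; have := hD 0%N; lra.
Qed.
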